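(* Let $(\Re, S, V)$ be a $V$-complete vector $S$-metric space, where $V$ is Archimedean. Let $K:\Re\to\Re$ be a continuous map and let $f:\Re\to\Re$ be a map commuting with $K$ (i.e. $fK=Kf$). Suppose: (a) $f(\Re)\subseteq K(\Re)$; (b) there is a constant $q\in[0,\tfrac13)$ such that for all $x,y\in\Re$, \[ S(fx,fx,fy)\preceq q\,U(x,x,y) \] for some \[ U(x,x,y)\in\{S(Kx,Kx,Ky),\ S(Kx,Kx,fx),\ S(Ky,Ky,fy),\ S(Kx,Kx,fy),\ S(Ky,Ky,fx)\}; \] (c) $K(\Re)$ or $f(\Re)$ is $V$-complete as a subspace of $\Re$. Then $K$ and $f$ have a unique common fixed point.
   Context: A vector lattice (Riesz space) $V$ is a real vector space with a partial order $\preceq$ compatible with the linear structure ($p_1 \preceq p_2 \Rightarrow p_1+p_3 \preceq p_2+p_3$ and $\omega p_1 \preceq \omega p_2$ for real $\omega>0$) in which every two-element set has a supremum and an infimum. $V$ is Archimedean if $\inf\{\tfrac{1}{m}v : m \in \mathbb{N}\} = 0$ for every $v \in V^+=\{v\in V: v\succeq 0\}$. For a sequence $(\mu_n)$ in $V$, $\mu_n \downarrow 0$ means $(\mu_n)$ is decreasing with $\inf_n \mu_n = 0$. A vector $S$-metric on a nonempty set $\Re$ is a map $S:\Re\times\Re\times\Re\to V$ such that for all $x,y,z,a\in\Re$: (a) $S(x,y,z)\succeq 0$; (b) $S(x,y,z)=0$ iff $x=y=z$; (c) $S(x,y,z)\preceq S(x,y,a)+S(y,y,a)+S(z,z,a)$.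 The triple $(\Re,S,V)$ is a vector $S$-metric space. A sequence $(x_n)$ in $\Re$ $V$-converges to $x\in\Re$ (written $x_n \xrightarrow{S,V} x$) if there is a sequence $(\mu_n)$ in $V$ with $\mu_n\downarrow 0$ and $S(x_n,x_n,x)\preceq \mu_n$ for all $n$. It is $V$-Cauchy if there is $(\mu_n)$ in $V$ with $\mu_n\downarrow 0$ and $S(x_n,x_n,x_{n+q})\preceq\mu_n$ for all $n$ and all $q$. The space (or a subset of it) is $V$-complete if every $V$-Cauchy sequence in it $V$-converges to a limit in it. A map $K:\Re\to\Re$ is continuous if $x_n\xrightarrow{S,V}x$ implies $Kx_n\xrightarrow{S,V}Kx$. *)

(* Defs.v *)
From mathcomp Require Import all_boot all_order all_algebra.
From mathcomp Require Import reals.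
Set Implicit Arguments. Unset Strict Implicit. Unset Printing Implicit Defensive.
Import Order.TTheory GRing.Theory Num.Theory.
Local Open Scope ring_scope.

Section VL.
Variables (R : realType) (V : lmodType R) (le : V -> V -> Prop).

Definition is_inf (A : V -> Prop) (a : V) : Prop :=
  (forall w, A w -> le a w) /\ (forall b, (forall w, A w -> le b w) -> le b a).
Definition is_sup (A : V -> Prop) (a : V) : Prop :=
  (forall w, A w -> le w a) /\ (forall b, (forall w, A w -> le w b) -> le a b).

Record vector_lattice : Prop := {
  vl_refl : forall p, le p p;
  vl_antisym : forall p1 p2, le p1 p2 -> le p2 p1 -> p1 = p2;
  vl_trans : forall p1 p2 p3, le p1 p2 -> le p2 p3 -> le p1 p3;
  vl_add : forall p1 p2 p3, le p1 p2 -> le (p1 + p3) (p2 + p3);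
  vl_scale : forall (w : R) p1 p2, 0 < w -> le p1 p2 -> le (w *: p1) (w *: p2);
  vl_sup : forall x y, exists s, is_sup (fun w => w = x \/ w = y) s;
  vl_inf : forall x y, exists i, is_inf (fun w => w = x \/ w = y) i }.

Definition archimedean_vl : Prop :=
  forall v, le 0 v ->
    is_inf (fun w => exists m : nat, (0 < m)%N /\ w = (m%:R)^-1 *: v) 0.

Definition decr_to_0 (mu : nat -> V) : Prop :=
  (forall n, le (mu n.+1) (mu n)) /\ is_inf (fun w => exists n, w = mu n) 0.

Variable X : Type.

Definition vector_S_metric (S : X -> X -> X -> V) : Prop :=
  (forall x y z, le 0 (S x y z)) /\
  (forall x y z, S x y z = 0 <-> (x = y /\ y = z)) /\
  (forall x y z a, le (S x y z) (S x y a + S y y a + S z z a)).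

Variable S : X -> X -> X -> V.

Definition V_converges (xs : nat -> X) (x : X) : Prop :=
  exists mu : nat -> V, decr_to_0 mu /\ forall n, le (S (xs n) (xs n) x) (mu n).

Definition V_Cauchy (xs : nat -> X) : Prop :=
  exists mu : nat -> V, decr_to_0 mu /\
    forall n q, le (S (xs n) (xs n) (xs (n + q)%N)) (mu n).

Definition V_complete (A : X -> Prop) : Prop :=
  forall xs : nat -> X, (forall n, A (xs n)) -> V_Cauchy xs ->
    exists x, A x /\ V_converges xs x.

Definition V_continuous (K : X -> X) : Prop :=
  forall xs x, V_converges xs x -> V_converges (fun n => K (xs n)) (K x).

End VL.

(* Main.v *)
Require Import Defs.
From mathcomp Require Import all_boot all_order all_algebra.
From mathcomp Require Import reals.
From mathcomp Require Import ring lra.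
Import Order.TTheory GRing.Theory Num.Theory.
Local Open Scope ring_scope.
Set Implicit Arguments.
From Stdlib Require Import ClassicalEpsilon.
Lemma vadd (R : realType) (V : lmodType R) (le : V -> V -> Prop) :
  vector_lattice le -> forall a b c d, le a b -> le c d -> le (a + c) (b + d).
Proof.
move=> H a b c d h1 h2; apply: (vl_trans H (vl_add H c h1)).
by rewrite ![b + _]addrC; apply: vl_add.
Qed.

Lemma vscl (R : realType) (V : lmodType R) (le : V -> V -> Prop) :
  vector_lattice le -> forall (w : R) a b, 0 <= w -> le a b -> le (w *: a) (w *: b).
Proof.
move=> H w a b; rewrite le0r => /orP[/eqP->|w0] h; last exact: vl_scale.
by rewrite !scale0r; apply: vl_refl.
Qed.

Lemma vscl0 (R : realType) (V : lmodType R) (le : V -> V -> Prop) :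
  vector_lattice le -> forall (w : R) a, 0 <= w -> le 0 a -> le 0 (w *: a).
Proof. by move=> H w a w0 h; rewrite -(scaler0 _ w); apply: vscl. Qed.

Lemma vsclr (R : realType) (V : lmodType R) (le : V -> V -> Prop) :
  vector_lattice le -> forall (s t : R) v, s <= t -> le 0 v -> le (s *: v) (t *: v).
Proof.
move=> H s t v st v0.
have st' : 0 <= t - s by lra.
have h := vl_add H (s *: v) (@vscl0 _ _ _ H (t - s) v st' v0).
by rewrite add0r -scalerDl subrK in h.
Qed.

Lemma vsub (R : realType) (V : lmodType R) (le : V -> V -> Prop) :
  vector_lattice le -> forall a b c, le a (b + c) -> le (a - c) b.
Proof. by move=> H a b c h; have := vl_add H (- c) h; rewrite addrK. Qed.

Lemma vabsorb (R : realType) (V : lmodType R) (le : V -> V -> Prop) :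
  vector_lattice le -> forall (s : R) a v, s < 1 -> le a (s *: a + v) ->
  le a ((1 - s)^-1 *: v).
Proof.
move=> H s a v s1 h.
have h2 : le (a - s *: a) v by apply: vsub H _ _ _ _; rewrite addrC.
have s1' : 0 <= (1 - s)^-1 by rewrite invr_ge0; lra.
have h3 := @vscl _ _ _ H _ _ _ s1' h2.
suff <- : (1 - s)^-1 *: (a - s *: a) = a by [].
have -> : a - s *: a = (1 - s) *: a by rewrite scalerBl scale1r.
rewrite scalerA mulVf ?scale1r //; lra.
Qed.

Lemma vle0 (R : realType) (V : lmodType R) (le : V -> V -> Prop) :
  vector_lattice le -> forall (k : R) a, 0 < k -> le (k *: a) 0 -> le a 0.
Proof.
move=> H k a k0 h; have k1 : 0 <= k^-1 by rewrite invr_ge0 ltW.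
have := @vscl _ _ _ H _ _ _ k1 h.
by rewrite scaler0 scalerA mulVf ?scale1r ?gt_eqF.
Qed.
Lemma S0 (R : realType) (V : lmodType R) (le : V -> V -> Prop) X (S : X -> X -> X -> V) :
  vector_S_metric le S -> forall x, S x x x = 0.
Proof. by move=> [_ [h _]] x; apply/h. Qed.

Lemma Ssym (R : realType) (V : lmodType R) (le : V -> V -> Prop) X (S : X -> X -> X -> V) :
  vector_lattice le -> vector_S_metric le S -> forall x y, S x x y = S y y x.
Proof.
move=> H HS x y; have [_ [_ t]] := HS.
apply: (vl_antisym H).
  by have := t x x y x; rewrite !(S0 HS) !add0r.
by have := t y y x y; rewrite !(S0 HS) !add0r.
Qed.

Lemma geom_small (R : realType) (h c e : R) : 0 <= h -> h < 1 -> 0 <= c -> 0 < e ->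
  exists n, c * h ^+ n <= e.
Proof.
move=> h0 h1 c0 e0.
have [->|hn0] := eqVneq h 0.
  by exists 1%N; rewrite expr1 mulr0 ltW.
have hp : 0 < h by rewrite lt_def hn0 h0.
pose t := h^-1 - 1.
have tp : 0 < t by rewrite /t subr_gt0 invf_gt1.
have bern : forall n : nat, 1 + n%:R * t <= (1 + t) ^+ n.
  elim=> [|n IH]; first by rewrite mul0r addr0 expr0.
  rewrite exprS -natr1.
  have n0 : 0 <= n%:R :> R by [].
  have := IH; nra.
have ht : h = (1 + t)^-1 by rewrite /t addrC subrK invrK.
pose n := Num.bound (c / (e * t)).
exists n.
have hb := archi_boundP (x := c / (e * t)) (divr_ge0 c0 (ltW (mulr_gt0 e0 tp))).
rewrite -/n in hb.
have b := bern n.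
rewrite ht exprVn.
have pp : 0 < (1 + t) ^+ n by apply: exprn_gt0; lra.
rewrite ler_pdivrMr //.
have : c < n%:R * (e * t).
  by rewrite -ltr_pdivrMr // mulr_gt0.
nra.
Qed.

Lemma vle_addl (R : realType) (V : lmodType R) (le : V -> V -> Prop) :
  vector_lattice le -> forall a b c, le 0 b -> le a c -> le a (b + c).
Proof. by move=> H a b c h1 h2; rewrite -[a]add0r; apply: vadd. Qed.

Lemma vle_addr (R : realType) (V : lmodType R) (le : V -> V -> Prop) :
  vector_lattice le -> forall a b c, le 0 b -> le a c -> le a (c + b).
Proof. by move=> H a b c h1 h2; rewrite addrC; apply: vle_addl. Qed.

Lemma vzero (R : realType) (V : lmodType R) (le : V -> V -> Prop) :
  vector_lattice le -> forall (q : R) b, q < 1 -> le 0 b -> le b (q *: b) -> b = 0.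
Proof.
move=> H q b q1 b0 hb; apply: (vl_antisym H) => //.
have := @vabsorb _ _ _ H q b 0 q1; rewrite addr0 scaler0; exact.
Qed.

Lemma Stri (R : realType) (V : lmodType R) (le : V -> V -> Prop) X (S : X -> X -> X -> V) :
  vector_S_metric le S -> forall x z a, le (S x x z) (S x x a + S x x a + S z z a).
Proof. by move=> [_ [_ t]] x z a; apply: t. Qed.

Lemma Sge0 (R : realType) (V : lmodType R) (le : V -> V -> Prop) X (S : X -> X -> X -> V) :
  vector_S_metric le S -> forall x y z, le 0 (S x y z).
Proof. by move=> [h _]. Qed.

Lemma Seq0 (R : realType) (V : lmodType R) (le : V -> V -> Prop) X (S : X -> X -> X -> V) :
  vector_S_metric le S -> forall x y, S x x y = 0 -> x = y.
Proof. by move=> [_ [h _]] x y /h []. Qed.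

Lemma inf_lb (R : realType) (V : lmodType R) (le : V -> V -> Prop) (mu : nat -> V) b :
  decr_to_0 le mu -> (forall n, le b (mu n)) -> le b 0.
Proof. by move=> [_ [_ h]] hb; apply: h => w [n ->]. Qed.

Lemma vge0_add (R : realType) (V : lmodType R) (le : V -> V -> Prop) :
  vector_lattice le -> forall a b, le 0 a -> le 0 b -> le 0 (a + b).
Proof. by move=> H a b h1 h2; rewrite -[0]addr0; apply: vadd. Qed.

Unset Implicit Arguments.

Theorem theorem2p2 (R : realType) (V : lmodType R) (le : V -> V -> Prop)
  (X : Type) (S : X -> X -> X -> V) (K f : X -> X) :
  vector_lattice le -> archimedean_vl le ->
  inhabited X ->
  vector_S_metric le S ->
  V_complete le S (fun _ => True) ->
  V_continuous le S K ->
  (forall x, f (K x) = K (f x)) ->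
  (forall y, (exists x, y = f x) -> exists x, y = K x) ->
  (exists q : R, 0 <= q /\ q < 3^-1 /\
     forall x y, exists U : V,
       (U = S (K x) (K x) (K y) \/ U = S (K x) (K x) (f x) \/
        U = S (K y) (K y) (f y) \/ U = S (K x) (K x) (f y) \/
        U = S (K y) (K y) (f x)) /\
       le (S (f x) (f x) (f y)) (q *: U)) ->
  (V_complete le S (fun y => exists x, y = K x) \/
   V_complete le S (fun y => exists x, y = f x)) ->
  exists x, (K x = x /\ f x = x) /\ forall z, K z = z /\ f z = z -> z = x.
Proof.
move=> H Harch [x0] HS Hcomp Hcont Hcomm Hsub [q [q0 [q3 Hc]]] _.
have q1 : q < 1 by apply: (lt_trans q3); rewrite invf_lt1 //; lra.
have q31 : 3 * q < 1 by rewrite -ltr_pdivlMl //; lra.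
have ge0 := Sge0 HS; have sym := Ssym H HS; have tri := Stri HS; have s0 := S0 HS.
have Hex : forall x, exists x', f x = K x'.
  by move=> x; have [x' ->] := Hsub (f x) (ex_intro _ x erefl); exists x'.
pose g x := proj1_sig (constructive_indefinite_description _ (Hex x)).
have Hg : forall x, f x = K (g x) by move=> x; exact: proj2_sig (constructive_indefinite_description _ (Hex x)).
pose xs n := iter n g x0.
pose y n := f (xs n).
have Ky : forall n, K (xs n.+1) = y n by move=> n; rewrite /y Hg.
pose d n := S (y n) (y n) (y n.+1).
pose hh := (1 - q)^-1 * (q + q).
have hh0 : 0 <= hh by rewrite /hh mulr_ge0 // ?invr_ge0; lra.
have hh1 : hh < 1 by rewrite /hh -ltr_pdivlMl ?invr_gt0 ?invrK; lra.
have dge0 : forall n, le 0 (d n) by move=> n; apply: ge0.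
have step : forall n, le (d n.+1) (hh *: d n).
  move=> n; have [U [HU Hle]] := Hc (xs n.+1) (xs n.+2).
  rewrite !Ky in HU.
  have HUb : le U (d n + d n + d n.+1).
    case: HU => [->|[->|[->|[->|->]]]].
    - by apply: (vle_addr H _ _ _ (dge0 _)); apply: (vle_addr H _ _ _ (dge0 _)); apply: (vl_refl H).
    - by apply: (vle_addr H _ _ _ (dge0 _)); apply: (vle_addr H _ _ _ (dge0 _)); apply: (vl_refl H).
    - by apply: (vle_addl H _ _ _ _ (vl_refl H _)); apply: (vge0_add H); apply: dge0.
    - rewrite (_ : f (xs n.+2) = y n.+2) //; apply: (vl_trans H (tri _ _ (y n.+1))); rewrite [S (y n.+2) _ _]sym; apply: (vl_refl H).
    - by rewrite s0; apply: (vge0_add H); [apply: (vge0_add H)|]; apply: dge0.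
  have : le (d n.+1) (q *: d n.+1 + (q + q) *: d n).
    apply: (vl_trans H Hle).
    have -> : q *: d n.+1 + (q + q) *: d n = q *: (d n + d n + d n.+1).
      by rewrite !scalerDr scalerDl addrC.
    by apply: (vscl H).
  by move/(vabsorb H _ _ _ q1); rewrite scalerA.
have dn : forall n, le (d n) (hh ^+ n *: d 0).
  elim=> [|n IH]; first by rewrite expr0 scale1r; apply: (vl_refl H).
  apply: (vl_trans H (step n)); rewrite exprS -scalerA; exact: (vscl H).
pose c := (1 + 1) * (1 - hh)^-1.
have c0 : 0 <= c by rewrite /c mulr_ge0 // ?invr_ge0; lra.
pose mu n := (c * hh ^+ n) *: d 0.
have mu0 : forall n, le 0 (mu n).
  by move=> n; apply: (vscl0 H) => //; rewrite mulr_ge0 // exprn_ge0.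
have Tb : forall m n, le (S (y n) (y n) (y (n + m)%N)) (mu n).
  elim=> [|m IH] n; first by rewrite addn0 s0.
  apply: (vl_trans H (tri _ _ (y n.+1))).
  rewrite [S (y (n + m.+1)%N) _ _]sym -addSnnS.
  have -> : mu n = hh ^+ n *: d 0 + hh ^+ n *: d 0 + mu n.+1.
    rewrite /mu -!scalerDl; congr (_ *: _).
    rewrite /c exprS; field; lra.
  by apply: (vadd H); [apply: (vadd H); apply: dn | apply: IH].
have mudec : decr_to_0 le mu.
  split.
    move=> n; apply: (vsclr H) => //.
    have := mulr_ge0 c0 (exprn_ge0 n hh0); rewrite exprS; nra.
  split; first by move=> w [n ->].
  move=> b hb; have [_ ha] := Harch (d 0) (ge0 _ _ _).
  apply: ha => w [m [m0 ->]].
  have e0 : 0 < (m%:R : R)^-1 by rewrite invr_gt0 ltr0n.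
  have [n hn] := @geom_small _ hh c _ hh0 hh1 c0 e0.
  apply: (vl_trans H (hb _ (ex_intro _ n erefl))).
  by apply: (vsclr H).
have [z [_ [mu' Hz]]] := Hcomp y (fun _ => I) (ex_intro _ mu (conj mudec (fun n q => Tb q n))).
have [nu [nudec Hnu]] := Hcont y z (ex_intro _ mu' Hz).
have Hnu' : forall n, le (S (K (y n)) (K (y n)) (K z)) (nu n) by [].
have nu0 : forall n, le 0 (nu n) by move=> n; apply: (vl_trans H (ge0 _ _ _) (Hnu' n)).
have nuD : forall n, le (nu n.+1) (nu n) by case: nudec.
have e' : forall n, le (S (K (y n.+1)) (K (y n.+1)) (K z)) (nu n).
  by move=> n; apply: (vl_trans H (Hnu' n.+1)).
have fy : forall n, f (y n) = K (y n.+1) by move=> n; rewrite [in RHS]/y -Hcomm Ky.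
pose a := S (K z) (K z) (f z).
have a0 : le 0 a by apply: ge0.
have nn0 : forall n, le 0 (nu n + nu n) by move=> n; apply: (vge0_add H).
have nnn0 : forall n, le 0 (nu n + nu n + nu n) by move=> n; apply: (vge0_add H).
have key : forall n, le a (q *: a + (nu n + nu n + q *: (nu n + nu n + nu n))).
  move=> n.
  apply: (vl_trans H (tri (K z) (f z) (f (y n)))).
  have -> : q *: a + (nu n + nu n + q *: (nu n + nu n + nu n)) =
            nu n + nu n + q *: (a + (nu n + nu n + nu n)).
    by rewrite [q *: (a + _)]scalerDr addrCA.
  apply: (vadd H).
    by rewrite fy [S (K z) _ _]sym; apply: (vadd H).
  rewrite sym; have [U [HU Hle]] := Hc (y n) z.
  apply: (vl_trans H Hle); apply: (vscl H) => //.
  case: HU => [->|[->|[->|[->|->]]]].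
  - apply: (vle_addl H _ _ _ a0); apply: (vle_addl H _ _ _ (nn0 n)); exact: Hnu'.
  - apply: (vle_addl H _ _ _ a0); rewrite fy.
    apply: (vl_trans H (tri _ _ (K z))).
    by apply: (vadd H); [apply: (vadd H); apply: Hnu'|exact: e'].
  - by apply: (vle_addr H _ _ _ (nnn0 n)); apply: (vl_refl H).
  - apply: (vl_trans H (tri _ _ (K z))); rewrite [S (f z) _ _]sym.
    have -> : a + (nu n + nu n + nu n) = nu n + nu n + a + nu n.
      by rewrite addrC -addrA [nu n + a]addrC addrA.
    apply: (vle_addr H _ _ _ (nu0 n)).
    by apply: (vadd H); [apply: (vadd H)|apply: (vl_refl H)].
  - rewrite fy sym; apply: (vle_addl H _ _ _ a0); apply: (vle_addl H _ _ _ (nn0 n)).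
    exact: e'.
pose k := (1 - q)^-1 * (1 + 1 + q * (1 + 1 + 1)).
have k0 : 0 < k by rewrite /k mulr_gt0 // ?invr_gt0; lra.
have ka : forall n, le (k^-1 *: a) (nu n).
  move=> n; have := vabsorb H _ _ _ q1 (key n).
  have -> : nu n + nu n + q *: (nu n + nu n + nu n) = (1 + 1 + q * (1 + 1 + 1)) *: nu n.
    by rewrite !scalerDl !scale1r -scalerA !scalerDl !scale1r.
  rewrite scalerA -/k => hk.
  have k1 : 0 <= k^-1 by rewrite invr_ge0 ltW.
  have := vscl H _ _ _ k1 hk.
  by rewrite scalerA mulVf ?scale1r ?gt_eqF.
have a00 : a = 0.
  apply: (vl_antisym H) => //.
  apply: (vle0 H k^-1); first by rewrite invr_gt0.
  exact: (inf_lb _ nudec ka).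
have Hfz : f z = K z by apply/esym/(Seq0 HS).
pose w := K z.
have fw : f w = K w by rewrite /w Hcomm Hfz.
have fww : f w = w.
  apply: (Seq0 HS); apply: (vzero H _ _ q1 (ge0 _ _ _)).
  have [U [HU Hle]] := Hc w z.
  rewrite Hfz -/w in Hle HU; rewrite -fw -/w in HU.
  apply: (vl_trans H Hle); apply: (vscl H) => //.
  case: HU => [->|[->|[->|[->|->]]]].
  - exact: (vl_refl H).
  - by rewrite s0.
  - by rewrite s0.
  - exact: (vl_refl H).
  - by rewrite sym; apply: (vl_refl H).
exists w; split; first by split=> //; rewrite -fw.
move=> u [Ku fu].
apply: (Seq0 HS); apply: (vzero H _ _ q1 (ge0 _ _ _)).
have [U [HU Hle]] := Hc u w.
rewrite fu fww in Hle; rewrite Ku -fw fww fu in HU.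
apply: (vl_trans H Hle); apply: (vscl H) => //.
case: HU => [->|[->|[->|[->|->]]]].
- exact: (vl_refl H).
- by rewrite s0.
- by rewrite s0.
- exact: (vl_refl H).
- by rewrite sym; apply: (vl_refl H).
Qed.
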